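(* Let $(p,m,r)\in\mathbb{Z}_{\ge0}^3$ with $2p+m+r=n$. Then the variety $\mathscr{Z}_{p,m,r}$ is irreducible, and $\mathscr{Z}_{p,m,r}$ equals the Zariski closure of the image of the morphism $\phi_{p,m,r}:GL_n(\mathbb{C})\times\mathbb{C}^{p+m}\times\mathbb{C}^{2p+r}\to\mathscr{Z}_n$ defined by $\phi_{p,m,r}(g,(a_1,\dots,a_{p+m}),(b_1,c_1,\dots,b_p,c_p,b_{p+1},\dots,b_{p+r}))=(gAg^{-1},gBg^{-1})$, where $A=\mathrm{diag}(a_1,-a_1,\dots,a_p,-a_p,a_{p+1},\dots,a_{p+m},0,\dots,0)$ ($r$ zeros) and $B=\mathrm{diag}\left(\begin{bmatrix}0&b_1\\c_1&0\end{bmatrix},\dots,\begin{bmatrix}0&b_p\\c_p&0\end{bmatrix},0,\dots,0,b_{p+1},\dots,b_{p+r}\right)$ (with $m$ zeros).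
   Context: $\mathscr{Z}_n=\{(A,B)\in M_n(\mathbb{C})^2 : AB+BA=0\}$, with $GL_n(\mathbb{C})$ acting by simultaneous conjugation. $\mathscr{Z}_{p,m,r}$ is the Zariski closure in $\mathscr{Z}_n$ of the union of the $GL_n$-orbits of all pairs $(A,B)\in\mathscr{Z}_n$ with $A=\mathrm{diag}(a_1,-a_1,\dots,a_p,-a_p,a_{p+1},\dots,a_{p+m},0,\dots,0)$ ($r$ zeros), where $a_i\in\mathbb{C}^*$ and $a_i\ne\pm a_j$ for $i\ne j$. *)

(* Defs.v *)
From mathcomp Require Import all_boot all_algebra.
From Stdlib Require Import Reals.
From mathcomp Require Import Rstruct complex mpoly.

Set Implicit Arguments.
Unset Strict Implicit.
Unset Printing Implicit Defensive.

Import GRing.Theory.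
Local Open Scope ring_scope.

Definition CC : numClosedFieldType := (complex R).

Definition MM (n : nat) := ('M[CC]_n * 'M[CC]_n)%type.

Definition coords (n : nat) (x : MM n) : 'I_(n * n + n * n) -> CC :=
  fun k => (row_mx (mxvec x.1) (mxvec x.2)) 0 k.

Definition polyMM (n : nat) := {mpoly CC[n * n + n * n]}.

Definition vanishes (n : nat) (q : polyMM n) (x : MM n) : Prop :=
  q.@[coords x] = 0.

Definition zariski_closed (n : nat) (S : MM n -> Prop) : Prop :=
  exists F : polyMM n -> Prop,
    forall x, S x <-> (forall q, F q -> vanishes q x).

Definition zariski_closure (n : nat) (T : MM n -> Prop) : MM n -> Prop :=
  fun x => forall q : polyMM n, (forall y, T y -> vanishes q y) -> vanishes q x.

Definition zariski_irreducible (n : nat) (X : MM n -> Prop) : Prop :=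
  (exists x, X x) /\
  forall Y1 Y2 : MM n -> Prop, zariski_closed Y1 -> zariski_closed Y2 ->
    (forall x, X x -> Y1 x \/ Y2 x) ->
    (forall x, X x -> Y1 x) \/ (forall x, X x -> Y2 x).

Definition anticomm (n : nat) (x : MM n) : Prop :=
  x.1 *m x.2 + x.2 *m x.1 = 0.

Definition fnat (k : nat) (a : 'I_k -> CC) (i : nat) : CC :=
  match insub i with Some j => a j | None => 0 end.

(* A = diag(a_1,-a_1,...,a_p,-a_p,a_{p+1},...,a_{p+m},0,...,0)  (0-indexed) *)
Definition diagA (p m r : nat) (a : 'I_(p + m) -> CC) : 'M[CC]_(2 * p + m + r) :=
  \matrix_(i < 2 * p + m + r, j < 2 * p + m + r)
    if i == j then
      (if ltn (nat_of_ord i) (2 * p) then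
         (if odd i then - fnat a i./2 else fnat a i./2)
       else if ltn (nat_of_ord i) (2 * p + m) then fnat a (subn i p)
       else 0)
    else 0.

(* B = diag([0 b_1; c_1 0], ..., [0 b_p; c_p 0], 0,...,0 (m), b_{p+1},...,b_{p+r})
   with parameter vector v = (b_1,c_1,...,b_p,c_p,b_{p+1},...,b_{p+r}) *)
Definition blockB (p m r : nat) (v : 'I_(2 * p + r) -> CC) : 'M[CC]_(2 * p + m + r) :=
  \matrix_(i < 2 * p + m + r, j < 2 * p + m + r)
    if [&& ltn (nat_of_ord i) (2 * p), ltn (nat_of_ord j) (2 * p), i./2 == j./2 & i != j :> nat]
    then fnat v i
    else if (leq (2 * p + m) (nat_of_ord i) && (i == j)) then fnat v (subn i m)
    else 0.

Definition conjpair (n : nat) (g : 'M[CC]_n) (x : MM n) : MM n :=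
  (g *m x.1 *m invmx g, g *m x.2 *m invmx g).

Definition admissible (k : nat) (a : 'I_k -> CC) : Prop :=
  (forall i, a i != 0) /\ (forall i j, i != j -> a i != a j /\ a i != - a j).

Arguments diagA : clear implicits.
Arguments blockB : clear implicits.

Definition orbits_pmr (p m r : nat) : MM (2 * p + m + r) -> Prop :=
  fun x => exists (g : 'M[CC]_(2 * p + m + r)) (a : 'I_(p + m) -> CC)
              (B : 'M[CC]_(2 * p + m + r)),
    [/\ g \in unitmx, admissible a, anticomm (diagA p m r a, B)
      & x = conjpair g (diagA p m r a, B)].

Arguments orbits_pmr : clear implicits.

(* the variety Z_{p,m,r} (closure in M_n(C)^2, which equals the closure in
   the closed subvariety Z_n) *)
Definition Zpmr (p m r : nat) : MM (2 * p + m + r) -> Prop :=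
  zariski_closure (orbits_pmr p m r).

Arguments Zpmr : clear implicits.

Definition phi_image (p m r : nat) : MM (2 * p + m + r) -> Prop :=
  fun x => exists (g : 'M[CC]_(2 * p + m + r)) (a : 'I_(p + m) -> CC)
              (v : 'I_(2 * p + r) -> CC),
    g \in unitmx /\ x = conjpair g (diagA p m r a, blockB p m r v).

Arguments phi_image : clear implicits.

(* Main.v *)
Require Import Defs.
From mathcomp Require Import all_boot all_algebra.
From Stdlib Require Import Reals.
From mathcomp Require Import Rstruct complex mpoly.
From mathcomp Require Import all_field.
From Stdlib Require Import Classical FunctionalExtensionality PropExtensionality.
From mathcomp Require Import zify.

Set Implicit Arguments.
Unset Strict Implicit.
Unset Printing Implicit Defensive.
Import GRing.Theory Num.Theory.
Local Open Scope ring_scope.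

Definition polyfun (f : CC -> CC) := exists P : {poly CC}, forall t, f t = P.[t].

Lemma polyfun_eq f g : (forall t, f t = g t) -> polyfun g -> polyfun f.
Proof. by move=> E [P HP]; exists P => t; rewrite E HP. Qed.

Lemma polyfun_cst c : polyfun (fun _ => c).
Proof. by exists c%:P => t; rewrite hornerC. Qed.

Lemma polyfun_id : polyfun (fun t => t).
Proof. by exists 'X => t; rewrite hornerX. Qed.

Lemma polyfunD f g : polyfun f -> polyfun g -> polyfun (fun t => f t + g t).
Proof. by move=> [P HP] [Q HQ]; exists (P + Q) => t; rewrite hornerD HP HQ. Qed.

Lemma polyfunM f g : polyfun f -> polyfun g -> polyfun (fun t => f t * g t).
Proof. by move=> [P HP] [Q HQ]; exists (P * Q) => t; rewrite hornerM HP HQ. Qed.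

Lemma polyfunN f : polyfun f -> polyfun (fun t => - f t).
Proof. by move=> [P HP]; exists (- P) => t; rewrite hornerN HP. Qed.

Lemma polyfunX f k : polyfun f -> polyfun (fun t => f t ^+ k).
Proof. by move=> [P HP]; exists (P ^+ k) => t; rewrite horner_exp HP. Qed.

Lemma polyfun_if (b : bool) f g : polyfun f -> polyfun g ->
  polyfun (fun t => if b then f t else g t).
Proof. by case: b. Qed.

Lemma polyfun_sum (I : Type) (s : seq I) (P : pred I) (F : I -> CC -> CC) :
  (forall i, P i -> polyfun (F i)) -> polyfun (fun t => \sum_(i <- s | P i) F i t).
Proof.
move=> H; elim: s => [|x s IH].
  by apply: (polyfun_eq (g := fun _ => 0)) => [t|]; rewrite ?big_nil //; apply: polyfun_cst.
case Px: (P x).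
  apply: (polyfun_eq (g := fun t => F x t + \sum_(i <- s | P i) F i t)) => [t|].
    by rewrite big_cons Px.
  exact: polyfunD (H _ Px) IH.
by apply: (polyfun_eq _ IH) => t; rewrite big_cons Px.
Qed.

Lemma polyfun_prod (I : Type) (s : seq I) (P : pred I) (F : I -> CC -> CC) :
  (forall i, P i -> polyfun (F i)) -> polyfun (fun t => \prod_(i <- s | P i) F i t).
Proof.
move=> H; elim: s => [|x s IH].
  by apply: (polyfun_eq (g := fun _ => 1)) => [t|]; rewrite ?big_nil //; apply: polyfun_cst.
case Px: (P x).
  apply: (polyfun_eq (g := fun t => F x t * \prod_(i <- s | P i) F i t)) => [t|].
    by rewrite big_cons Px.
  exact: polyfunM (H _ Px) IH.
by apply: (polyfun_eq _ IH) => t; rewrite big_cons Px.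
Qed.

Definition polymx m n (F : CC -> 'M[CC]_(m, n)) := forall i j, polyfun (fun t => F t i j).

Lemma polymx_cst m n (A : 'M[CC]_(m, n)) : polymx (fun _ => A).
Proof. by move=> i j; apply: polyfun_cst. Qed.

Lemma polymxD m n (F G : CC -> 'M[CC]_(m, n)) : polymx F -> polymx G -> polymx (fun t => F t + G t).
Proof.
move=> HF HG i j; apply: (polyfun_eq (g := fun t => F t i j + G t i j)) => [t|]; first by rewrite mxE.
exact: polyfunD.
Qed.

Lemma polymxZ m n (c : CC -> CC) (F : CC -> 'M[CC]_(m, n)) : polyfun c -> polymx F -> polymx (fun t => c t *: F t).
Proof.
move=> Hc HF i j; apply: (polyfun_eq (g := fun t => c t * F t i j)) => [t|]; first by rewrite mxE.
exact: polyfunM.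
Qed.

Lemma polymxM m n k (F : CC -> 'M[CC]_(m, n)) (G : CC -> 'M[CC]_(n, k)) :
  polymx F -> polymx G -> polymx (fun t => F t *m G t).
Proof.
move=> HF HG i j; apply: (polyfun_eq (g := fun t => \sum_l F t i l * G t l j)) => [t|]; first by rewrite mxE.
by apply: polyfun_sum => l _; apply: polyfunM.
Qed.

Lemma polymx_det n (F : CC -> 'M[CC]_n) : polymx F -> polyfun (fun t => \det (F t)).
Proof.
move=> HF; rewrite /determinant; apply: polyfun_sum => s _.
apply: polyfunM; first exact: polyfun_cst.
by apply: polyfun_prod => i _; apply: HF.
Qed.

Lemma polymx_adj n (F : CC -> 'M[CC]_n) : polymx F -> polymx (fun t => \adj (F t)).
Proof.
move=> HF i j; apply: (polyfun_eq (g := fun t => cofactor (F t) j i)) => [t|]; first by rewrite mxE.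
rewrite /cofactor; apply: polyfunM; first exact: polyfun_cst.
apply: polymx_det => k l.
apply: (polyfun_eq (g := fun t => F t (lift j k) (lift i l))) => [t|]; first by rewrite !mxE.
exact: HF.
Qed.

Lemma poly_all0 (P : {poly CC}) : (forall t, P.[t] = 0) -> P = 0.
Proof.
move=> H; have [//|nz] := eqVneq P 0; exfalso.
pose rs := [seq (i%:R : CC) | i <- iota 0 (size P)].
have Hall : all (root P) rs by apply/allP => x /mapP[i _ ->]; rewrite /root H.
have Hu : uniq rs.
  rewrite map_inj_uniq ?iota_uniq //.
  by move=> i j /eqP; rewrite eqr_nat => /eqP.
by have := max_poly_roots nz Hall Hu; rewrite size_map size_iota ltnn.
Qed.

Lemma poly_zero_off (P Q : {poly CC}) : Q != 0 -> (forall t, Q.[t] != 0 -> P.[t] = 0) -> P = 0.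
Proof.
move=> nQ H; have : P * Q = 0.
  apply: poly_all0 => t; rewrite hornerM.
  by have [Qt|Qt] := eqVneq Q.[t] 0; rewrite ?Qt ?mulr0 // H // mul0r.
by move/eqP; rewrite mulf_eq0 (negPf nQ) orbF => /eqP.
Qed.

Lemma meval_rat k (q : {mpoly CC[k]}) (y : 'I_k -> CC -> CC) (e : CC -> CC) :
  (forall i, polyfun (y i)) -> polyfun e ->
  exists N : {poly CC}, forall t, e t != 0 ->
    q.@[fun i => y i t / e t] * e t ^+ msize q = N.[t].
Proof.
move=> Hy He.
have : polyfun (fun t => \sum_(m <- msupp q) q@_m * \prod_i y i t ^+ m i * e t ^+ (msize q - mdeg m)).
  apply: polyfun_sum => mm _; apply: polyfunM; last exact: polyfunX.
  apply: polyfunM; first exact: polyfun_cst.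
  by apply: polyfun_prod => i _; apply: polyfunX.
case=> N HN; exists N => t et; rewrite -HN mevalE mulr_suml.
rewrite big_seq_cond [RHS]big_seq_cond; apply: eq_bigr => mm /andP[mq _].
have lt := msize_mdeg_lt mq.
rewrite -!mulrA; congr (_ * _).
rewrite (eq_bigr (fun i => y i t ^+ mm i * (e t)^-1 ^+ mm i)); last by move=> i _; rewrite exprMn.
rewrite big_split /= prodrXr -mdegE -mulrA; congr (_ * _).
by rewrite -{1}(subnK (ltnW lt)) exprD mulrCA exprVn mulVf ?mulr1 // expf_neq0.
Qed.

Definition coordfun n (z : CC -> MM n) (e : CC -> CC) :=
  polyfun e /\ exists y : 'I_(n * n + n * n) -> CC -> CC, (forall k, polyfun (y k)) /\
    forall t, e t != 0 -> forall k, coords (z t) k = y k t / e t.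

Lemma curve_eval n z e (q : polyMM n) : coordfun z e ->
  exists N : {poly CC}, exists D : nat, forall t, e t != 0 -> q.@[coords (z t)] * e t ^+ D = N.[t].
Proof.
move=> [He [y [Hy Hz]]]; have [N HN] := meval_rat q Hy He.
exists N, (msize q) => t et; rewrite -HN //; congr (_ * _); apply: meval_eq => k; exact: Hz.
Qed.

Lemma polyfun_nz f t0 : polyfun f -> f t0 != 0 -> exists P : {poly CC}, P != 0 /\ forall t, f t = P.[t].
Proof.
move=> [P HP] ft0; exists P; split => //; apply/eqP => P0; move: ft0.
by rewrite HP P0 horner0 eqxx.
Qed.

Lemma curve_vanish n (z : CC -> MM n) e d (q : polyMM n) t0 t1 :
  coordfun z e -> polyfun d -> d t0 != 0 -> e t1 != 0 ->
  (forall t, e t != 0 -> d t != 0 -> vanishes q (z t)) -> vanishes q (z t1).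
Proof.
move=> Hz Hd dt0 et1 H.
have [N [D HN]] := curve_eval q Hz.
have [Pd [nPd HPd]] := polyfun_nz Hd dt0.
have [Pe [nPe HPe]] := polyfun_nz Hz.1 et1.
have N0 : N = 0.
  apply: (poly_zero_off (Q := Pd * Pe)); first by rewrite mulf_neq0.
  move=> t; rewrite hornerM mulf_eq0 negb_or -HPd -HPe => /andP[dt et].
  by rewrite -HN // (H t et dt) mul0r.
have := HN t1 et1; rewrite N0 horner0 => /eqP; rewrite mulf_eq0 expf_eq0 (negPf et1) andbF orbF.
by move/eqP.
Qed.

Lemma irreducible_crit n (S : MM n -> Prop) :
  (exists x, S x) ->
  (forall x0 x1, S x0 -> S x1 -> exists (z : CC -> MM n) e t0 t1,
     [/\ coordfun z e, e t0 != 0, e t1 != 0, z t0 = x0 & z t1 = x1] /\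
     forall t, e t != 0 -> S (z t)) ->
  zariski_irreducible (zariski_closure S).
Proof.
move=> [x Sx] Hline; split; first by exists x => q Hq; apply: Hq.
move=> Y1 Y2 [F1 H1] [F2 H2] Hcov.
have clS y : S y -> zariski_closure S y by move=> Sy q Hq; apply: Hq.
have vq y : S y -> (forall q, F1 q -> vanishes q y) \/ (forall q, F2 q -> vanishes q y).
  move=> Sy; case: (Hcov y (clS y Sy)) => [/H1|/H2]; by [left|right].
have bad (Y : MM n -> Prop) F : (forall x, Y x <-> (forall q, F q -> vanishes q x)) ->
   ~ (forall x, zariski_closure S x -> Y x) -> exists q y, [/\ F q, S y & ~ vanishes q y].
  move=> HY nY; apply: NNPP => nE; apply: nY => x0 clx; apply/HY => q Fq.
  apply: clx => y Sy; apply: NNPP => nv; apply: nE; exists q, y; exact: (And3 Fq Sy nv).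
case: (classic (forall x, zariski_closure S x -> Y1 x)) => [|n1]; first by left.
case: (classic (forall x, zariski_closure S x -> Y2 x)) => [|n2]; first by right.
exfalso.
have [q1 [y1 [F1q1 Sy1 nv1]]] := bad _ _ H1 n1.
have [q2 [y2 [F2q2 Sy2 nv2]]] := bad _ _ H2 n2.
have [z [e [t0 [t1 [[cz et0 et1 z0 z1] Sz]]]]] := Hline _ _ Sy1 Sy2.
have [N1 [D1 HN1]] := curve_eval q1 cz.
have [N2 [D2 HN2]] := curve_eval q2 cz.
have [Pe [nPe HPe]] := polyfun_nz cz.1 et0.
have N12 : N1 * N2 = 0.
  apply: (poly_zero_off nPe) => t; rewrite -HPe => et.
  rewrite hornerM -HN1 // -HN2 //.
  case: (vq _ (Sz t et)) => [Hv|Hv].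
    by rewrite (eqP (introT eqP (Hv q1 F1q1))) !mul0r.
  by rewrite (eqP (introT eqP (Hv q2 F2q2))) mul0r mulr0.
move/eqP: N12; rewrite mulf_eq0 => /orP[] /eqP N0.
  apply: nv1; move: (HN1 t0 et0); rewrite N0 horner0 z0 => /eqP.
  by rewrite mulf_eq0 expf_eq0 (negPf et0) andbF orbF => /eqP.
apply: nv2; move: (HN2 t1 et1); rewrite N0 horner0 z1 => /eqP.
by rewrite mulf_eq0 expf_eq0 (negPf et1) andbF orbF => /eqP.
Qed.

Lemma polyfun_fnat k (a : CC -> 'I_k -> CC) i : (forall j, polyfun (fun t => a t j)) ->
  polyfun (fun t => fnat (a t) i).
Proof. move=> H; rewrite /fnat; case: (insub i) => [j|]; [exact: H | exact: polyfun_cst]. Qed.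

Lemma polymx_matrix m n (G : CC -> 'I_m -> 'I_n -> CC) :
  (forall i j, polyfun (fun t => G t i j)) -> polymx (fun t => \matrix_(i, j) G t i j).
Proof.
move=> H i j; apply: (polyfun_eq (g := fun t => G t i j)) => [t|]; [by rewrite mxE | exact: H].
Qed.

Lemma polymx_diagA p m r (a : CC -> 'I_(p + m) -> CC) :
  (forall j, polyfun (fun t => a t j)) -> polymx (fun t => diagA p m r (a t)).
Proof.
move=> H; rewrite /diagA; apply: (@polymx_matrix _ _ (fun t i j => _)) => i j /=.
repeat apply: polyfun_if; try apply: polyfunN;
  first [apply: polyfun_fnat; exact: H | exact: polyfun_cst].
Qed.

Lemma polymx_blockB p m r (v : CC -> 'I_(2 * p + r) -> CC) :
  (forall j, polyfun (fun t => v t j)) -> polymx (fun t => blockB p m r (v t)).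
Proof.
move=> H; rewrite /blockB; apply: (@polymx_matrix _ _ (fun t i j => _)) => i j /=.
repeat apply: polyfun_if; first [apply: polyfun_fnat; exact: H | exact: polyfun_cst].
Qed.

Lemma coords_polyfun n (F1 F2 : CC -> 'M[CC]_n) : polymx F1 -> polymx F2 ->
  forall k, polyfun (fun t => coords (F1 t, F2 t) k).
Proof.
move=> H1 H2 k; rewrite /coords /=.
case: (split_ordP k) => j ->.
  apply: (polyfun_eq (g := fun t => mxvec (F1 t) 0 j)) => [t|]; first by rewrite row_mxEl.
  case/mxvec_indexP: j => i1 i2.
  by apply: (polyfun_eq (g := fun t => F1 t i1 i2)) => [t|]; [rewrite mxvecE | exact: H1].
apply: (polyfun_eq (g := fun t => mxvec (F2 t) 0 j)) => [t|]; first by rewrite row_mxEr.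
case/mxvec_indexP: j => i1 i2.
by apply: (polyfun_eq (g := fun t => F2 t i1 i2)) => [t|]; [rewrite mxvecE | exact: H2].
Qed.

Lemma coords_scale n c (X1 X2 : 'M[CC]_n) k : coords (c *: X1, c *: X2) k = c * coords (X1, X2) k.
Proof. by rewrite /coords /= !linearZ /= -scale_row_mx mxE. Qed.

Lemma coordfun_conj n (g : CC -> 'M[CC]_n) (X1 X2 : CC -> 'M[CC]_n) :
  polymx g -> polymx X1 -> polymx X2 ->
  coordfun (fun t => conjpair (g t) (X1 t, X2 t)) (fun t => \det (g t)).
Proof.
move=> Hg H1 H2; split; first exact: polymx_det.
exists (fun k t => coords (g t *m X1 t *m \adj (g t), g t *m X2 t *m \adj (g t)) k); split.
  by move=> k; apply: coords_polyfun; apply: polymxM; try apply: polymxM; try apply: polymx_adj.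
move=> t et k; have gu : g t \in unitmx by rewrite unitmxE unitfE.
rewrite /conjpair /= /invmx gu -!scalemxAr coords_scale mulrC.
by [].
Qed.

Lemma polyfun_lin c d : polyfun (fun t => (1 - t) * c + t * d).
Proof.
apply: polyfunD; apply: polyfunM; try exact: polyfun_cst; try exact: polyfun_id.
apply: polyfunD; [exact: polyfun_cst | apply: polyfunN; exact: polyfun_id].
Qed.

Lemma polymx_lin m n (A B : 'M[CC]_(m, n)) : polymx (fun t => (1 - t) *: A + t *: B).
Proof.
move=> i j; apply: (polyfun_eq (g := fun t => (1 - t) * A i j + t * B i j)) => [t|].
  by rewrite !mxE.
exact: polyfun_lin.
Qed.

Lemma mul_diagl n (A B : 'M[CC]_n) i j : (forall k l, k != l -> A k l = 0) ->
  (A *m B) i j = A i i * B i j.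
Proof.
move=> H; rewrite mxE (bigD1 i) //= big1 ?addr0 // => k ki.
by rewrite H ?mul0r // eq_sym.
Qed.

Lemma mul_diagr n (A B : 'M[CC]_n) i j : (forall k l, k != l -> A k l = 0) ->
  (B *m A) i j = B i j * A j j.
Proof.
move=> H; rewrite mxE (bigD1 j) //= big1 ?addr0 // => k kj.
by rewrite H ?mulr0.
Qed.

Lemma diagA_offdiag p m r a (i j : 'I_(2 * p + m + r)) : i != j -> diagA p m r a i j = 0.
Proof. by rewrite mxE => /negPf->. Qed.

Lemma half_odd (i j : nat) : i./2 = j./2 -> i != j -> odd j = ~~ odd i.
Proof.
move=> h nij; move: (odd_double_half i) (odd_double_half j); rewrite h; move: (j./2) => k.
case: (odd i); case: (odd j) => //= Ei Ej; by move: nij; rewrite -Ei -Ej eqxx.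
Qed.

Lemma anticomm_AB p m r a v : anticomm (diagA p m r a, blockB p m r v).
Proof.
rewrite /anticomm /=; apply/matrixP => i j.
rewrite [in LHS]mxE mul_diagl; last exact: diagA_offdiag.
rewrite mul_diagr; last exact: diagA_offdiag.
rewrite [_ * diagA _ _ _ _ _ _]mulrC -mulrDl [RHS]mxE.
rewrite [blockB _ _ _ _ i j]mxE.
case: ifP => [/and4P[ip jp /eqP hij nij]|_].
  rewrite !mxE !eqxx ip jp (half_odd hij nij) hij.
  by case: (odd i) => /=; rewrite ?addNr ?subrr mul0r.
case: ifP => [/andP[ijm /eqP eij]|_]; last by rewrite mulr0.
subst j; rewrite !mxE eqxx.
have -> : ltn i (2 * p) = false by rewrite /= ltnNge (leq_trans _ ijm) ?leq_addr.
have -> : ltn i (2 * p + m) = false by rewrite /= ltnNge ijm.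
by rewrite addr0 mul0r.
Qed.

Definition astar k : 'I_k -> CC := fun i => (i.+1)%:R.
Arguments astar : clear implicits.

Definition admprod k (a : 'I_k -> CC) :=
  \prod_i a i * \prod_i \prod_j (if i == j then 1 else (a i - a j) * (a i + a j)).

Lemma admprod_adm k (a : 'I_k -> CC) : admprod a != 0 -> admissible a.
Proof.
rewrite /admprod mulf_eq0 negb_or => /andP[H1 H2]; split.
  by move=> i; move: H1; rewrite (bigD1 i) //= mulf_eq0 negb_or => /andP[].
move=> i j nij; move: H2; rewrite (bigD1 i) //= mulf_eq0 negb_or => /andP[+ _].
rewrite (bigD1 j) //= (negPf nij) mulf_eq0 negb_or => /andP[+ _].
rewrite mulf_eq0 negb_or subr_eq0 addr_eq0 => /andP[-> ->]; done.
Qed.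

Lemma adm_admprod k (a : 'I_k -> CC) : admissible a -> admprod a != 0.
Proof.
move=> [H1 H2]; rewrite /admprod mulf_neq0 //; rewrite prodf_seq_neq0; apply/allP => i _ /=.
  exact: H1.
rewrite prodf_seq_neq0; apply/allP => j _ /=.
case: (eqVneq i j) => [_|nij]; first exact: oner_neq0.
by have [h1 h2] := H2 _ _ nij; rewrite mulf_neq0 // ?subr_eq0 ?addr_eq0.
Qed.

Lemma astar_adm k : admissible (astar k).
Proof.
split => [i|i j nij]; first by rewrite /astar pnatr_eq0.
rewrite /astar eqr_nat eqSS; split => //.
rewrite -addr_eq0 -natrD pnatr_eq0 addnS //.
Qed.

Lemma polyfun_admprod k (a : CC -> 'I_k -> CC) : (forall i, polyfun (fun t => a t i)) ->
  polyfun (fun t => admprod (a t)).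
Proof.
move=> H; rewrite /admprod; apply: polyfunM; apply: polyfun_prod => i _ //.
apply: polyfun_prod => j _; apply: polyfun_if; first exact: polyfun_cst.
apply: polyfunM; [apply: polyfunD; last apply: polyfunN | apply: polyfunD]; exact: H.
Qed.

Lemma phi_in_cl_orbits p m r y : phi_image p m r y -> zariski_closure (orbits_pmr p m r) y.
Proof.
move=> [g [a [v [gu ->]]]] q Hq.
pose at_ t := fun i => (1 - t) * astar _ i + t * a i.
have -> : conjpair g (diagA p m r a, blockB p m r v) =
   (fun t => conjpair g (diagA p m r (at_ t), blockB p m r v)) 1.
  rewrite /=; congr (conjpair g (diagA p m r _, _)); apply: functional_extensionality => i.
  by rewrite /at_ subrr mul0r add0r mul1r.
have Hat : forall i, polyfun (fun t => at_ t i) by move=> i; exact: polyfun_lin.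
apply: (@curve_vanish _ (fun t => conjpair g (diagA p m r (at_ t), blockB p m r v)) (fun _ => \det g) (fun t => admprod (at_ t)) q 0 1).
- apply: (coordfun_conj (g := fun _ => g)); [exact: polymx_cst | exact: polymx_diagA | exact: polymx_cst].
- exact: polyfun_admprod.
- have -> : at_ 0 = astar _.
    by apply: functional_extensionality => i; rewrite /at_ subr0 mul1r mul0r addr0.
  exact/adm_admprod/astar_adm.
- by rewrite -unitfE -unitmxE.
- move=> t _ dt; apply: Hq; exists g, (at_ t), (blockB p m r v); split => //.
    exact: admprod_adm.
  exact: anticomm_AB.
Qed.

Lemma phi_irred p m r : zariski_irreducible (zariski_closure (phi_image p m r)).
Proof.
apply: irreducible_crit.
  exists (conjpair 1%:M (diagA p m r (fun _ => 0), blockB p m r (fun _ => 0))).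
  by exists 1%:M, (fun _ => 0), (fun _ => 0); split => //; exact: unitmx1.
move=> x0 x1 [g0 [a0 [v0 [g0u ->]]]] [g1 [a1 [v1 [g1u ->]]]].
pose g t := (1 - t) *: g0 + t *: g1.
pose a t := fun i => (1 - t) * a0 i + t * a1 i.
pose v t := fun i => (1 - t) * v0 i + t * v1 i.
have g0E : g 0 = g0 by rewrite /g subr0 scale1r scale0r addr0.
have g1E : g 1 = g1 by rewrite /g subrr scale0r scale1r add0r.
have a0E : a 0 = a0 by apply: functional_extensionality => i; rewrite /a subr0 mul1r mul0r addr0.
have a1E : a 1 = a1 by apply: functional_extensionality => i; rewrite /a subrr mul0r mul1r add0r.
have v0E : v 0 = v0 by apply: functional_extensionality => i; rewrite /v subr0 mul1r mul0r addr0.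
have v1E : v 1 = v1 by apply: functional_extensionality => i; rewrite /v subrr mul0r mul1r add0r.
exists (fun t => conjpair (g t) (diagA p m r (a t), blockB p m r (v t))), (fun t => \det (g t)), 0, 1.
split; first split.
- apply: coordfun_conj; first exact: polymx_lin.
    by apply: polymx_diagA => j; exact: polyfun_lin.
  by apply: polymx_blockB => j; exact: polyfun_lin.
- by rewrite g0E -unitfE -unitmxE.
- by rewrite g1E -unitfE -unitmxE.
- by rewrite g0E a0E v0E.
- by rewrite g1E a1E v1E.
move=> t et; exists (g t), (a t), (v t); split => //; by rewrite ?unitmxE ?unitfE.
Qed.

Definition D0 r : 'rV[CC]_r := \row_i (i.+1)%:R.

Lemma sep_res (p : {poly CC}) : p != 0 -> (resultant p p^`() != 0) = separable_poly p.
Proof.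
move=> np; rewrite resultant_eq0 unlock /coprimep.
have : leq 1 (size (gcdp p p^`())) by rewrite size_poly_gt0 gcdp_eq0 negb_and np.
by case: (size _) => [|[|s]].
Qed.


Lemma diag_line r (Br : 'M[CC]_r) : exists d, [/\ polyfun d, d 0 != 0 &
  forall t, d t != 0 -> exists P D, P \in unitmx /\
    (1 - t) *: diag_mx (D0 r) + t *: Br = invmx P *m diag_mx D *m P].
Proof.
case: r Br => [|r'] Br.
  exists (fun _ => 1); split; [exact: polyfun_cst | exact: oner_neq0 |].
  move=> t _; exists 1%:M, 0; split; first exact: unitmx1.
  by apply/matrixP => [[]].
pose M t := (1 - t) *: diag_mx (D0 r'.+1) + t *: Br.
pose MP : 'M[{poly CC}]_r'.+1 := (1 - 'X) *: map_mx polyC (diag_mx (D0 r'.+1)) + 'X *: map_mx polyC Br.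
pose ch := char_poly MP.
pose R := resultant ch ch^`().
have MPt t : map_mx (horner_eval t) MP = M t.
  by apply/matrixP => i j; rewrite !mxE /horner_eval !hornerE.
have chm : lead_coef ch = 1 by apply/monicP; exact: char_poly_monic.
have szch : size ch = r'.+2 by rewrite size_char_poly.
have ch'r : ch^`()`_r' = r'.+1%:R.
  rewrite coef_deriv; have -> : ch`_r'.+1 = lead_coef ch by rewrite lead_coefE szch.
  by rewrite chm.
have szch' : size ch^`() = r'.+1.
  apply/eqP; rewrite eqn_leq; apply/andP; split.
    by have := lt_size_deriv (p := ch); rewrite szch ltnS; apply; rewrite -size_poly_eq0 szch.
  rewrite ltnNge; apply/negP => /(nth_default 0); rewrite ch'r => /eqP.
  by rewrite -polyC_natr polyC_eq0 pnatr_eq0.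
have ch'l : lead_coef ch^`() = r'.+1%:R by rewrite lead_coefE szch'.
have Rt t : R.[t] = resultant (char_poly (M t)) (char_poly (M t))^`().
  rewrite -MPt -map_char_poly deriv_map.
  rewrite -[R.[t]]/(horner_eval t R) map_resultant //.
    by rewrite chm rmorph1 oner_neq0.
  by rewrite ch'l rmorph_nat pnatr_eq0.
have nzcp t : char_poly (M t) != 0 by apply: monic_neq0; exact: char_poly_monic.
exists (fun t => R.[t]); split; first by exists R.
  rewrite Rt sep_res //.
  have -> : M 0 = diag_mx (D0 r'.+1) by rewrite /M subr0 scale1r scale0r addr0.
  rewrite char_poly_trig ?diag_mx_is_trig //.
  rewrite (eq_bigr (fun i => 'X - ((D0 r'.+1) 0 i)%:P)); last by move=> i _; rewrite mxE eqxx mulr1n.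
  rewrite -(big_map (fun i => D0 r'.+1 0 i) xpredT (fun z => 'X - z%:P)).
  rewrite separable_prod_XsubC map_inj_uniq ?index_enum_uniq //.
  by move=> i j; rewrite !mxE => /eqP; rewrite eqr_nat eqSS => /eqP /val_inj.
move=> t; rewrite Rt sep_res // => sep.
have [rs Ers] := closed_field_poly_normal (char_poly (M t)).
move: Ers; rewrite (monicP (char_poly_monic _)) scale1r => Ers.
have urs : uniq rs by rewrite -separable_prod_XsubC -Ers.
have : diagonalizable (M t).
  apply/diagonalizableP; exists rs => //; rewrite -Ers; exact: mxminpoly_dvd_char.
case=> P Pu /(diagonalizable_forLR Pu) [D ED].
exists P, D; split => //.
by rewrite -/(M t) ED mxpoly.conjumx ?unitmx_inv // invmxK.
Qed.

Lemma fnat_lt k (a : 'I_k -> CC) x (hx : (x < k)%nat) : fnat a x = a (Ordinal hx).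
Proof. by rewrite /fnat insubT. Qed.

Lemma two_neq0 : (1 + 1 : CC) != 0.
Proof. by rewrite -mulr2n mulrn_eq0 oner_eq0. Qed.

Lemma adm_sum k (a : 'I_k -> CC) (x y : nat) (b c : bool) : admissible a ->
  (x < k)%nat -> (y < k)%nat ->
  (-1) ^+ b * fnat a x + (-1) ^+ c * fnat a y = 0 -> x = y /\ c = ~~ b.
Proof.
move=> [H1 H2] hx hy; rewrite (fnat_lt _ hx) (fnat_lt _ hy).
case: (eqVneq x y) => [exy|nxy].
  subst y; have -> : Ordinal hy = Ordinal hx by apply: val_inj.
  rewrite -mulrDl => /eqP; rewrite mulf_eq0 (negPf (H1 _)) orbF => /eqP.
  move=> H; split => //; move: H; case: b; case: c => //=; rewrite ?expr0 ?expr1 => /eqP.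
    by rewrite -opprD oppr_eq0 (negPf two_neq0).
  by rewrite (negPf two_neq0).
have nO : Ordinal hx != Ordinal hy by apply: contra nxy => /eqP [->].
have [h1 h2] := H2 _ _ nO.
move=> H; exfalso; move: H; case: b; case: c; rewrite ?expr0 ?expr1 ?mulN1r ?mul1r => /eqP.
- by rewrite -opprD oppr_eq0 addr_eq0 (negPf h2).
- by rewrite addrC subr_eq0 eq_sym (negPf h1).
- by rewrite subr_eq0 (negPf h1).
- by rewrite addr_eq0 (negPf h2).
Qed.

Lemma alpha_form p m r a (i : 'I_(2 * p + m + r)) : (i < 2 * p + m)%nat ->
  diagA p m r a i i = (-1) ^+ ((i < 2 * p)%nat && odd i) *
     fnat a (if (i < 2 * p)%nat then i./2 else (i - p)%nat).
Proof.
move=> him; rewrite mxE eqxx /=.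
case: ifP => hi /=; last by rewrite him expr0 mul1r.
by case: (odd i); rewrite ?expr1 ?mulN1r ?expr0 ?mul1r.
Qed.

Lemma alpha_idx p m (i : nat) : (i < 2 * p + m)%nat ->
  ((if (i < 2 * p)%nat then i./2 else (i - p)%nat) < p + m)%nat.
Proof.
move=> him; case: ifP => hi.
  apply: (leq_trans _ (leq_addr m p)); by rewrite ltn_half_double -mul2n.
move/negbT: hi => hi; lia.
Qed.

Lemma anticomm_entry p m r a B i j : anticomm (diagA p m r a, B) ->
  (diagA p m r a i i + diagA p m r a j j) * B i j = 0.
Proof.
move=> /matrixP /(_ i j) H.
have E : (diagA p m r a *m B + B *m diagA p m r a) i j =
    (diagA p m r a i i + diagA p m r a j j) * B i j.
  rewrite mxE mul_diagl; last exact: diagA_offdiag.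
  rewrite mul_diagr; last exact: diagA_offdiag.
  by rewrite mulrDl (mulrC (diagA _ _ _ _ j j)).
by rewrite -E H mxE.
Qed.

Lemma alpha_zero p m r a (i : 'I_(2 * p + m + r)) : (2 * p + m <= i)%nat -> diagA p m r a i i = 0.
Proof.
move=> hi; rewrite mxE eqxx.
have -> : ltn i (2 * p) = false by rewrite /= ltnNge (leq_trans _ hi) ?leq_addr.
by have -> : ltn i (2 * p + m) = false by rewrite /= ltnNge hi.
Qed.

Lemma alpha_nz p m r a (i : 'I_(2 * p + m + r)) : admissible a -> (i < 2 * p + m)%nat ->
  diagA p m r a i i != 0.
Proof.
move=> [H1 _] hi; rewrite alpha_form // mulf_eq0 negb_or signr_eq0 /=.
by rewrite (fnat_lt _ (alpha_idx hi)).
Qed.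

Lemma zero_struct p m r a B (i j : 'I_(2 * p + m + r)) : admissible a ->
  anticomm (diagA p m r a, B) -> B i j != 0 ->
  [&& (i < 2 * p)%nat, (j < 2 * p)%nat, i./2 == j./2 & i != j :> nat]
   || ((2 * p + m <= i)%nat && (2 * p + m <= j)%nat).
Proof.
move=> adm ac nB.
have S : diagA p m r a i i + diagA p m r a j j = 0.
  by move: (anticomm_entry i j ac) => /eqP; rewrite mulf_eq0 (negPf nB) orbF => /eqP.
case: (leqP (2 * p + m) i) => hi; case: (leqP (2 * p + m) j) => hj.
- by apply/orP; right; apply/andP.
- by move: S; rewrite alpha_zero // add0r => /eqP; rewrite (negPf (alpha_nz adm hj)).
- by move: S; rewrite (alpha_zero _ hj) addr0 => /eqP; rewrite (negPf (alpha_nz adm hi)).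
rewrite !alpha_form // in S.
have [ex eb] := adm_sum adm (alpha_idx hi) (alpha_idx hj) S.
apply/orP; left.
case: (ltnP i (2 * p)) => hi2 in ex eb *; case: (ltnP j (2 * p)) => hj2 in ex eb * => /=.
- rewrite ex eqxx /=; apply/eqP => eij; move: eb; rewrite eij.
  by case: (odd j).
- exfalso; have h : (i./2 < p)%nat by rewrite ltn_half_double -mul2n.
  rewrite ex in h; lia.
- exfalso; have h : (j./2 < p)%nat by rewrite ltn_half_double -mul2n.
  rewrite -ex in h; lia.
- by move: eb.
Qed.

Definition mxn n (M : 'M[CC]_n) (i j : nat) : CC :=
  match insub i, insub j with Some i', Some j' => M i' j' | _, _ => 0 end.

Lemma mxn_val n (M : 'M[CC]_n) (i j : 'I_n) : mxn M i j = M i j.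
Proof. by rewrite /mxn !valK. Qed.

Definition partner (i : nat) : nat := if odd i then i.-1 else i.+1.

Lemma partnerP (i j : nat) : i./2 = j./2 -> i != j -> j = partner i.
Proof.
move=> h nij; have oj := half_odd h nij; rewrite /partner.
move: (odd_double_half i) (odd_double_half j); rewrite h oj; move: (j./2) => k.
by case: (odd i) => /= <- <-.
Qed.

Definition vof p m r (B : 'M[CC]_(2 * p + m + r)) (D : 'rV[CC]_r) : 'I_(2 * p + r) -> CC :=
  fun k => if (k < 2 * p)%nat then mxn B k (partner k) else fnat (fun j => D 0 j) (k - 2 * p)%nat.

Lemma L_A p m r a : diagA p m r a = block_mx (ulsubmx (diagA p m r a)) 0 0 0.
Proof.
rewrite -{1}(submxK (diagA p m r a)); congr block_mx; apply/matrixP => i j; rewrite !mxE.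
- case: eqP => // /(congr1 val) /=; have := ltn_ord i; lia.
- case: eqP => // /(congr1 val) /=; have := ltn_ord j; lia.
- case: eqP => // _ /=.
  have -> : (2 * p + m + i < 2 * p)%nat = false by lia.
  by have -> : (2 * p + m + i < 2 * p + m)%nat = false by lia.
Qed.

Lemma L_B p m r a B : admissible a -> anticomm (diagA p m r a, B) ->
  B = block_mx (ulsubmx B) 0 0 (drsubmx B).
Proof.
move=> adm ac; rewrite -{1}(submxK B); congr block_mx; apply/matrixP => i j; rewrite !mxE.
- apply/eqP; apply: contraT => nz; have := zero_struct adm ac nz.
  case/orP => [/and4P[h1 h2 _ _]|/andP[h1 h2]]; move: h1 h2; rewrite /=; have := ltn_ord i; lia.
- apply/eqP; apply: contraT => nz; have := zero_struct adm ac nz.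
  case/orP => [/and4P[h1 h2 _ _]|/andP[h1 h2]]; move: h1 h2; rewrite /=; have := ltn_ord j; lia.
Qed.

Lemma L_V p m r a B D : admissible a -> anticomm (diagA p m r a, B) ->
  blockB p m r (vof B D) = block_mx (ulsubmx B) 0 0 (diag_mx D).
Proof.
move=> adm ac; rewrite -{1}(submxK (blockB p m r (vof B D))); congr block_mx;
  apply/matrixP => i j; rewrite !mxE /=.
- case: ifP => [/and4P[h1 h2 /eqP h3 h4]|hn].
    have hi : (i < 2 * p + r)%nat by lia.
    rewrite (fnat_lt _ hi) /vof /= h1.
    rewrite -(partnerP h3 h4).
    have -> : (i : nat) = lshift r i by [].
    have -> : (j : nat) = lshift r j by [].
    by rewrite mxn_val.
  case: ifP => [/andP[h1 _]|_]; first by have := ltn_ord i; lia.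
  apply/esym/eqP; apply: contraT => nz; have := zero_struct adm ac nz.
  rewrite /= hn /=; have := ltn_ord i; move=> hi /andP[h1 h2]; lia.
- case: ifP => [/and4P[h1 h2 _ _]|_]; first by lia.
  by case: ifP => [/andP[h1 _]|_] //; have := ltn_ord i; lia.
- case: ifP => [/and4P[h1 h2 _ _]|_]; first by lia.
  case: ifP => [/andP[_ /eqP /(congr1 val) /=]|_] //; have := ltn_ord j; lia.
- case: ifP => [/and4P[h1 h2 _ _]|_]; first by lia.
  have -> : (2 * p + m <= 2 * p + m + i)%nat by rewrite leq_addr.
  rewrite /=; case: (eqVneq i j) => [<-|nij].
    rewrite eqxx mulr1n.
    have hi : ((2 * p + m + i - m) < 2 * p + r)%nat by have := ltn_ord i; lia.
    rewrite (fnat_lt _ hi) /vof /=.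
    have -> : (2 * p + m + i - m < 2 * p)%nat = false by lia.
    have -> : (2 * p + m + i - m - 2 * p)%nat = i by lia.
    by rewrite (fnat_lt _ (ltn_ord i)); congr (D 0 _); apply: val_inj.
  have -> : (rshift (2 * p + m) i == rshift (2 * p + m) j) = false.
    by apply/negbTE; apply: contra nij => /eqP /(congr1 val) /= h; apply/eqP/val_inj => /=; lia.
  by rewrite mulr0n.
Qed.

Lemma invmxM' n (g h : 'M[CC]_n) : g \in unitmx -> h \in unitmx ->
  invmx (g *m h) = invmx h *m invmx g.
Proof.
move=> gu hu; have ghu : g *m h \in unitmx by rewrite unitmx_mul gu hu.
have E : (g *m h) *m (invmx h *m invmx g) = 1%:M.
  by rewrite mulmxA -(mulmxA g) mulmxV // mulmx1 mulmxV.
by rewrite -[LHS]mulmx1 -E mulmxA mulVmx // mul1mx.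
Qed.

Lemma orbits_in_cl_phi p m r y : orbits_pmr p m r y -> zariski_closure (phi_image p m r) y.
Proof.
move=> [g [a [B [gu adm ac ->]]]] q Hq.
have [d [Hd d0 Hdt]] := diag_line (drsubmx B).
pose M t := (1 - t) *: diag_mx (D0 r) + t *: drsubmx B.
pose Bt t := block_mx (ulsubmx B) 0 0 (M t).
have B1 : Bt 1 = B by rewrite /Bt /M subrr scale0r scale1r add0r -(L_B adm ac).
have -> : conjpair g (diagA p m r a, B) = (fun t => conjpair g (diagA p m r a, Bt t)) 1.
  by rewrite /= B1.
apply: (@curve_vanish _ (fun t => conjpair g (diagA p m r a, Bt t)) (fun _ => \det g) d q 0 1).
- apply: (coordfun_conj (g := fun _ => g)); [exact: polymx_cst | exact: polymx_cst |].
  have -> : Bt = fun t => (1 - t) *: block_mx (ulsubmx B) 0 0 (diag_mx (D0 r))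
                         + t *: block_mx (ulsubmx B) 0 0 (drsubmx B).
    apply: functional_extensionality => t.
    by rewrite /Bt /M !scale_block_mx add_block_mx !scaler0 !addr0 -scalerDl subrK scale1r.
  exact: polymx_lin.
- exact: Hd.
- exact: d0.
- by rewrite -unitfE -unitmxE.
move=> t _ dt; have [P [D [Pu EM]]] := Hdt t dt.
pose h : 'M[CC]_(2 * p + m + r) := block_mx 1%:M 0 0 (invmx P).
have hu : h \in unitmx by rewrite block_diag_mx_unit unitmx1 unitmx_inv.
have hi : invmx h = block_mx 1%:M 0 0 P by rewrite invmx_block_diag // invmx1 invmxK.
apply: Hq; exists (g *m h), a, (vof B D); split; first by rewrite unitmx_mul gu hu.
have conjE X : g *m h *m X *m invmx (g *m h) = g *m (h *m X *m invmx h) *m invmx g.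
  by rewrite invmxM' // !mulmxA.
rewrite /conjpair /= !conjE hi; congr (_, _).
  rewrite {2}(@L_A p m r a) [in LHS](@L_A p m r a) !mulmx_block.
  by rewrite !(mulmx0, mul0mx, mul1mx, mulmx1, addr0, add0r).
rewrite (L_V D adm ac) !mulmx_block !(mulmx0, mul0mx, mul1mx, mulmx1, addr0, add0r).
by rewrite -EM.
Qed.

Theorem proposition3p2 (p m r : nat) :
  zariski_irreducible (Zpmr p m r) /\
  Zpmr p m r = zariski_closure (phi_image p m r).
Proof.
have E : Zpmr p m r = zariski_closure (phi_image p m r).
  apply: functional_extensionality => x; apply: propositional_extensionality; split.
    move=> Zx q Hq; apply: Zx => y Oy; exact: (orbits_in_cl_phi Oy).
  move=> Cx q Hq; apply: Cx => y Py; exact: (phi_in_cl_orbits Py).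
by split => //; rewrite E; exact: phi_irred.
Qed.
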